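(* Let $Q\in\mathbb{R}^{n\times n}$ be symmetric positive definite with $Q_{i,i}=1$ for all $i$, whose support graph is a connected tree, and let $c,\lambda\in\mathbb{R}^n$ with $\lambda_i>0$ for all $i$. Then for every node $u\in\{1,\dots,n\}$ there exist functions $p_{u,s}:\mathbb{R}\to\mathbb{R}$, indexed by $s\in\{0,1\}^{n_u-1}$, each of which is a strongly convex quadratic function (i.e. $p_{u,s}(\alpha)=a\alpha^2+b\alpha+d$ with $a>0$), such that for all $\alpha\in\mathbb{R}$, $$f_u(\alpha)=\min_{s\in\{0,1\}^{n_u-1}} p_{u,s}(\alpha)+\lambda_u\mathbb{1}_{\alpha}.$$
   Context: The support graph $\mathrm{supp}(Q)$ of a symmetric $Q\in\mathbb{R}^{n\times n}$ is the undirected graph on $\{1,\dots,n\}$ with edge $\{i,j\}$ ($i\neq j$) iff $Q_{i,j}\neq 0$. The tree is rooted at node $n$ and nodes are labeled topologically: every non-root node $u$ has a unique neighbor $\mathrm{child}(u)$ on its path to the root, and $u<\mathrm{child}(u)$; $\mathrm{par}(u)=\{v:\mathrm{child}(v)=u\}$. $\mathrm{supp}_u(Q)$ is the subtree consisting of $u$ and all nodes whose path to the root passes through $u$; $n_u$ is its number of nodes (so $u$ is the largest label in it). $Q_{[u]}$, $c_{[u]}$, $\lambda_{[u]}$ are the restrictions of $Q,c,\lambda$ to the index set of $\mathrm{supp}_u(Q)$. $\mathbb{1}_\alpha$ equals $0$ if $\alpha=0$ and $1$ otherwise. The parametric cost at node $u$ is $$f_u(\alpha)=\min_{x\in\mathbb{R}^{n_u},\,z\in\{0,1\}^{n_u}}\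 \tfrac12 x^\top Q_{[u]}x+c_{[u]}^\top x+\lambda_{[u]}^\top z\ \ \text{s.t. } x_i(1-z_i)=0\ \forall i,\ \ x_u=\alpha,$$ where $x_u$ denotes the coordinate of $x$ corresponding to node $u$. *)

(* Defs.v *)
From HB Require Import structures.
From mathcomp Require Import all_boot all_order all_algebra.
From mathcomp Require Import boolp classical_sets reals.
Set Implicit Arguments. Unset Strict Implicit. Unset Printing Implicit Defensive.
Import Order.TTheory GRing.Theory Num.Theory.
Local Open Scope ring_scope.

Section Defs.
Variable R : realType.
Variable m : nat.
(* The paper's n is m.+1; nodes 1..n are 'I_m.+1 = {0..m}; the root (node n) is ord_max. *)
Implicit Types (Q : 'M[R]_m.+1).

Definition root : 'I_m.+1 := ord_max.

Definition supp_adj Q : rel 'I_m.+1 := fun i j => (i != j) && (Q i j != 0).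

Definition graph_connected Q := forall i j : 'I_m.+1, connect (supp_adj Q) i j.

Definition graph_acyclic Q :=
  forall c : seq 'I_m.+1, (3 <= size c)%N -> ~ ucycle (supp_adj Q) c.

Definition is_tree Q := graph_connected Q /\ graph_acyclic Q.

(* v belongs to supp_u(Q): the path from v to the root passes through u
   (in a tree: every walk from v to the root visits u) *)
Definition in_subtree Q (u v : 'I_m.+1) : Prop :=
  forall p : seq 'I_m.+1, path (supp_adj Q) v p -> last v p = root -> u \in v :: p.

Definition topological_labels Q :=
  forall u v : 'I_m.+1, in_subtree Q u v -> (v <= u)%N.

Definition subtree Q (u : 'I_m.+1) : {set 'I_m.+1} :=
  [set v | `[< in_subtree Q u v >] ].

Definition obj_u Q (c lam : 'I_m.+1 -> R) (u : 'I_m.+1)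
    (x : 'I_m.+1 -> R) (z : 'I_m.+1 -> bool) : R :=
  2^-1 * (\sum_(i in subtree Q u) \sum_(j in subtree Q u) x i * Q i j * x j)
  + \sum_(i in subtree Q u) c i * x i
  + \sum_(i in subtree Q u) lam i * (z i)%:R.

Definition feasible_u Q (u : 'I_m.+1) (alpha : R)
    (x : 'I_m.+1 -> R) (z : 'I_m.+1 -> bool) : Prop :=
  (forall i, i \in subtree Q u -> x i * (1 - (z i)%:R) = 0) /\ x u = alpha.

(* f_u(alpha) : the minimum (taken as infimum) of the objective over feasible (x,z) *)
Definition f_u Q (c lam : 'I_m.+1 -> R) (u : 'I_m.+1) (alpha : R) : R :=
  inf [set t | exists x z, feasible_u Q u alpha x z /\ t = obj_u Q c lam u x z].

Definition indic (alpha : R) : R := (alpha != 0)%:R.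

Definition n_u Q (u : 'I_m.+1) : nat := #|subtree Q u|.

End Defs.

(* Main.v *)
Require Import Defs.
From HB Require Import structures.
From mathcomp Require Import all_boot all_order all_algebra.
From mathcomp Require Import classical_sets reals boolp ring lra.
Import Order.TTheory GRing.Theory Num.Theory.
Local Open Scope ring_scope.

Section Core.
Variable R : realType.
Variable m : nat.
Variable Q : 'M[R]_m.+1.
Variable c : 'I_m.+1 -> R.
Hypothesis hQs : Q^T = Q.
Hypothesis hpd : forall x : 'cV[R]_m.+1, x != 0 -> 0 < (x^T *m Q *m x) ord0 ord0.
Variable U : {set 'I_m.+1}.
Variable u : 'I_m.+1.
Hypothesis huU : u \in U.

Lemma Qs i j : Q i j = Q j i.
Proof. by rewrite -[in LHS]hQs mxE. Qed.

Definition qU (x : 'I_m.+1 -> R) :=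
  \sum_(i in U) \sum_(j in U) x i * Q i j * x j.
Definition FU (x : 'I_m.+1 -> R) :=
  2^-1 * qU x + \sum_(i in U) c i * x i.

Lemma qf_expand (v : 'cV[R]_m.+1) :
  (v^T *m Q *m v) ord0 ord0 = \sum_i \sum_j v i ord0 * Q i j * v j ord0.
Proof.
rewrite mxE exchange_big /=; apply: eq_bigr => j _.
rewrite mxE mulr_suml; apply: eq_bigr => i _; by rewrite !mxE.
Qed.

Lemma qU_mask (x : 'I_m.+1 -> R) :
  qU x = ((\col_i (if i \in U then x i else 0))^T *m Q
            *m (\col_i (if i \in U then x i else 0))) ord0 ord0.
Proof.
rewrite qf_expand /qU big_mkcond; apply: eq_bigr => i _.
rewrite big_mkcond /= !mxE; case: (i \in U).
  apply: eq_bigr => j _; rewrite !mxE; case: (j \in U) => //; by rewrite mulr0.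
by rewrite big1 // => j _; rewrite !mul0r.
Qed.

Lemma qU_ge0 (x : 'I_m.+1 -> R) : 0 <= qU x.
Proof.
rewrite qU_mask; set v := \col__ _.
case: (eqVneq v 0) => [->|nz]; first by rewrite mulmx0 mxE.
by apply/ltW/hpd.
Qed.

Lemma qU_gt0 (x : 'I_m.+1 -> R) i : i \in U -> x i != 0 -> 0 < qU x.
Proof.
move=> iU xi; rewrite qU_mask; apply: hpd; apply/negP => /eqP h.
have := congr1 (fun A : 'cV[R]_m.+1 => A i ord0) h; rewrite !mxE iU => hx; by rewrite hx eqxx in xi.
Qed.

Lemma qU_add (a v : 'I_m.+1 -> R) : qU (fun i => a i + v i) =
  qU a + 2 * (\sum_(i in U) v i * \sum_(j in U) Q i j * a j) + qU v.
Proof.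
have sym : \sum_(i in U) \sum_(j in U) a i * Q i j * v j =
    \sum_(i in U) v i * \sum_(j in U) Q i j * a j.
  rewrite exchange_big; apply: eq_bigr => i _; rewrite mulr_sumr.
  apply: eq_bigr => j _; rewrite (Qs j i). ring.
have e2 : \sum_(i in U) \sum_(j in U) v i * Q i j * a j =
    \sum_(i in U) v i * \sum_(j in U) Q i j * a j.
  by apply: eq_bigr => i _; rewrite mulr_sumr; apply: eq_bigr => j _; rewrite mulrA.
rewrite /qU.
rewrite (eq_bigr (fun i => \sum_(j in U) a i * Q i j * a j + \sum_(j in U) a i * Q i j * v j
   + \sum_(j in U) v i * Q i j * a j + \sum_(j in U) v i * Q i j * v j)); last first.
  move=> i _; rewrite -!big_split /=; apply: eq_bigr => j _; ring.
rewrite !big_split /= sym e2; ring.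
Qed.

Lemma qU_scale (al : R) (w : 'I_m.+1 -> R) : qU (fun i => al * w i) = al ^+ 2 * qU w.
Proof.
rewrite /qU mulr_sumr; apply: eq_bigr => i _; rewrite mulr_sumr.
by apply: eq_bigr => j _; ring.
Qed.

Lemma FU_add (a v : 'I_m.+1 -> R) : FU (fun i => a i + v i) =
  FU a + \sum_(i in U) v i * (\sum_(j in U) Q i j * a j + c i) + 2^-1 * qU v.
Proof.
rewrite /FU qU_add.
have -> : \sum_(i in U) c i * (a i + v i) = \sum_(i in U) c i * a i + \sum_(i in U) c i * v i.
  by rewrite -big_split /=; apply: eq_bigr => i _; ring.
have -> : \sum_(i in U) v i * (\sum_(j in U) Q i j * a j + c i) =
   \sum_(i in U) v i * (\sum_(j in U) Q i j * a j) + \sum_(i in U) c i * v i.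
  by rewrite -big_split /=; apply: eq_bigr => i _; ring.
by field.
Qed.

Variable T : {set 'I_m.+1}.
Hypothesis hTU : T \subset U.
Hypothesis huT : u \notin T.

Definition Mx : 'M[R]_m.+1 :=
  \matrix_(i, j) if i \in T then (if j \in T then Q i j else 0) else (i == j)%:R.

Lemma Mx_out (y : 'cV[R]_m.+1) i : i \notin T -> (Mx *m y) i ord0 = y i ord0.
Proof.
move=> iT; rewrite mxE (bigD1 i) //= mxE (negbTE iT) eqxx mul1r big1 ?addr0 //.
by move=> j ji; rewrite mxE (negbTE iT) eq_sym (negbTE ji) mul0r.
Qed.

Lemma Mx_in (y : 'cV[R]_m.+1) i : i \in T -> (forall j, j \notin T -> y j ord0 = 0) ->
  (Mx *m y) i ord0 = \sum_j Q i j * y j ord0.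
Proof.
move=> iT hy; rewrite mxE; apply: eq_bigr => j _; rewrite mxE iT.
by case: (boolP (j \in T)) => jT //; rewrite hy // !mulr0.
Qed.

Lemma Mx_unit : Mx \in unitmx.
Proof.
rewrite -unitmx_tr -row_free_unit; apply: inj_row_free => v hv.
have hy : Mx *m v^T = 0 by rewrite -[Mx]trmxK -trmx_mul hv trmx0.
set y := v^T in hy.
have yout : forall i, i \notin T -> y i ord0 = 0.
  move=> i iT; have := congr1 (fun A : 'cV[R]_m.+1 => A i ord0) hy.
  by rewrite Mx_out // => ->; rewrite mxE.
have yin : forall i, i \in T -> (Q *m y) i ord0 = 0.
  move=> i iT; have := congr1 (fun A : 'cV[R]_m.+1 => A i ord0) hy.
  by rewrite Mx_in // => h; rewrite mxE h mxE.
have q0 : (y^T *m Q *m y) ord0 ord0 = 0.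
  rewrite -mulmxA mxE big1 // => i _; rewrite mxE.
  case: (boolP (i \in T)) => iT; first by rewrite yin // mulr0.
  by rewrite yout // mul0r.
case: (eqVneq y 0) => [y0|ynz]; first by rewrite -[v]trmxK -/y y0 trmx0.
by have := hpd y ynz; rewrite q0 ltxx.
Qed.

Lemma sol_prop (r : 'cV[R]_m.+1) : (forall i, i \notin T -> r i ord0 = 0) ->
  (forall i, i \notin T -> (invmx Mx *m r) i ord0 = 0) /\
  (forall i, i \in T -> \sum_j Q i j * (invmx Mx *m r) j ord0 = r i ord0).
Proof.
move=> hr; have E := mulKVmx Mx_unit r; set y := invmx Mx *m r in E *.
have yout : forall i, i \notin T -> y i ord0 = 0.
  move=> i iT; have := congr1 (fun A : 'cV[R]_m.+1 => A i ord0) E.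
  by rewrite Mx_out // => ->; rewrite hr.
split => // i iT; have := congr1 (fun A : 'cV[R]_m.+1 => A i ord0) E.
by rewrite Mx_in.
Qed.

Definition r1 : 'cV[R]_m.+1 := \col_i (if i \in T then - Q i u else 0).
Definition r0 : 'cV[R]_m.+1 := \col_i (if i \in T then - c i else 0).
Definition y1 := invmx Mx *m r1.
Definition y0 := invmx Mx *m r0.
Definition w (i : 'I_m.+1) : R := (i == u)%:R + y1 i ord0.
Definition y0f (i : 'I_m.+1) : R := y0 i ord0.
Definition xs (al : R) (i : 'I_m.+1) : R := y0f i + al * w i.

Lemma r1P : (forall i, i \notin T -> r1 i ord0 = 0).
Proof. by move=> i iT; rewrite mxE (negbTE iT). Qed.
Lemma r0P : (forall i, i \notin T -> r0 i ord0 = 0).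
Proof. by move=> i iT; rewrite mxE (negbTE iT). Qed.

Lemma xs_u al : xs al u = al.
Proof.
rewrite /xs /w /y0f (proj1 (sol_prop _ r0P)) // (proj1 (sol_prop _ r1P)) // eqxx.
by rewrite add0r addr0 mulr1.
Qed.

Lemma xs_out al i : i \notin T -> i != u -> xs al i = 0.
Proof.
move=> iT iu; rewrite /xs /w /y0f (proj1 (sol_prop _ r0P)) // (proj1 (sol_prop _ r1P)) //.
by rewrite (negbTE iu) add0r addr0 mulr0.
Qed.

Lemma grad al i : i \in T -> \sum_(j in U) Q i j * xs al j + c i = 0.
Proof.
move=> iT.
have -> : \sum_(j in U) Q i j * xs al j = \sum_j Q i j * xs al j.
  rewrite big_mkcond; apply: eq_bigr => j _; case: (boolP (j \in U)) => jU //.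
  have jT : j \notin T by apply/negP => /(fintype.subsetP hTU); rewrite (negbTE jU).
  have ju : j != u by apply: contraNneq jU => ->.
  by rewrite xs_out // mulr0.
rewrite (eq_bigr (fun j => Q i j * y0 j ord0 + al * (Q i j * (j == u)%:R)
   + al * (Q i j * y1 j ord0))); last by move=> j _; rewrite /xs /w /y0f; ring.
rewrite !big_split /= -!mulr_sumr.
have -> : \sum_j Q i j * (j == u)%:R = Q i u.
  rewrite (bigD1 u) //= eqxx mulr1 big1 ?addr0 //.
  by move=> j /negbTE ->; rewrite mulr0.
rewrite /y1 /y0 (proj2 (sol_prop _ r0P)) // (proj2 (sol_prop _ r1P)) // !mxE iT.
ring.
Qed.

Lemma FU_min al (x : 'I_m.+1 -> R) : x u = al ->
  (forall i, i \in U -> i \notin T -> i != u -> x i = 0) -> FU (xs al) <= FU x.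
Proof.
move=> hxu hx.
have -> : x = (fun i => xs al i + (x i - xs al i)).
  by apply: funext => i; rewrite addrC subrK.
rewrite FU_add big1 ?addr0; last first.
  move=> i iU; case: (boolP (i \in T)) => iT; first by rewrite grad // mulr0.
  case: (eqVneq i u) => [->|iu]; first by rewrite hxu xs_u subrr mul0r.
  by rewrite hx // xs_out // subrr mul0r.
by rewrite lerDl mulr_ge0 ?qU_ge0 // invr_ge0 ler0n.
Qed.

Definition aq := 2^-1 * qU w.
Definition bq := \sum_(i in U) w i * (\sum_(j in U) Q i j * y0f j)
   + \sum_(i in U) c i * w i.
Definition dq := FU y0f.

Lemma FU_xs al : FU (xs al) = aq * al ^+ 2 + bq * al + dq.
Proof.
rewrite /xs (FU_add y0f (fun i => al * w i)) qU_scale /aq /bq /dq.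
have -> : \sum_(i in U) al * w i * (\sum_(j in U) Q i j * y0f j + c i) =
   al * (\sum_(i in U) w i * (\sum_(j in U) Q i j * y0f j) + \sum_(i in U) c i * w i).
  by rewrite -big_split mulr_sumr /=; apply: eq_bigr => i _; ring.
ring.
Qed.

Lemma aq_gt0 : 0 < aq.
Proof.
rewrite /aq mulr_gt0 ?invr_gt0 ?ltr0n //; apply: (qU_gt0 w u huU).
by rewrite /w (proj1 (sol_prop _ r1P)) // eqxx addr0 oner_eq0.
Qed.

End Core.

Lemma sum_lam_split (R : realType) (m : nat) (lam : 'I_m.+1 -> R)
  (U T : {set 'I_m.+1}) (u : 'I_m.+1) (z : 'I_m.+1 -> bool) :
  u \in U -> T \subset U :\ u ->
  (forall i, i \in U :\ u -> z i = (i \in T)) ->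
  \sum_(i in U) lam i * (z i)%:R = lam u * (z u)%:R + \sum_(i in T) lam i.
Proof.
move=> uU TA hz; rewrite (bigD1 u) //=; congr (_ + _).
rewrite big_mkcond [RHS]big_mkcond; apply: eq_bigr => i _ /=.
case: (boolP (i \in T)) => iT.
  have iA := fintype.subsetP TA _ iT; move: (iA); rewrite !inE => /andP [-> ->].
  by rewrite hz // iT mulr1.
case: (boolP ((i \in U) && (i != u))) => // h.
by rewrite hz ?(negbTE iT) ?mulr0 // !inE andbC.
Qed.

Theorem lemma1 (R : realType) (m : nat) (Q : 'M[R]_m.+1) (c lam : 'I_m.+1 -> R) :
  Q^T = Q ->
  (forall x : 'cV[R]_m.+1, x != 0 -> 0 < (x^T *m Q *m x) ord0 ord0) ->
  (forall i, Q i i = 1) ->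
  is_tree Q ->
  topological_labels Q ->
  (forall i, 0 < lam i) ->
  forall u : 'I_m.+1,
  exists a b d : {ffun 'I_(n_u Q u).-1 -> bool} -> R,
    (forall s, 0 < a s) /\
    forall alpha : R,
      exists2 s0 : {ffun 'I_(n_u Q u).-1 -> bool},
        (forall s, a s0 * alpha ^+ 2 + b s0 * alpha + d s0
                   <= a s * alpha ^+ 2 + b s * alpha + d s) &
        f_u Q c lam u alpha
          = a s0 * alpha ^+ 2 + b s0 * alpha + d s0 + lam u * indic alpha.
Proof.
move=> hQs hpd _ _ _ hlam u.
set U := subtree Q u.
have huU : u \in U by rewrite inE; apply/asboolP => p _ _; exact: mem_head.
set A := U :\ u.
have E : (n_u Q u).-1 = #|A| by rewrite /n_u -/U (cardsD1 u U) huU.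
pose Ts (s : {ffun 'I_(n_u Q u).-1 -> bool}) : {set 'I_m.+1} :=
  [set @enum_val _ (mem A) (cast_ord E i) | i in [pred i | s i]].
have TsA s : Ts s \subset A.
  by apply/fintype.subsetP => v /imsetP [i _ ->]; exact: enum_valP.
have TsU s : Ts s \subset U := fintype.subset_trans (TsA s) (subD1set U u).
have uTs s : u \notin Ts s.
  by apply/negP => /(fintype.subsetP (TsA s)); rewrite !inE eqxx.
exists (fun s => aq R m Q U u (Ts s)), (fun s => bq R m Q c U u (Ts s)),
  (fun s => dq R m Q c U (Ts s) + \sum_(i in Ts s) lam i).
split; first by move=> s; apply: (@aq_gt0 R m Q hpd U u huU _ (uTs s)).
move=> al.
have xsu := @xs_u R m Q c hpd u.
have xso := @xs_out R m Q c hpd u.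
pose p s := aq R m Q U u (Ts s) * al ^+ 2 + bq R m Q c U u (Ts s) * al
   + (dq R m Q c U (Ts s) + \sum_(i in Ts s) lam i).
case: (@arg_minP _ _ _ [ffun=> false] xpredT p isT) => s0 _ hs0.
exists s0; first by move=> s; apply: hs0.
have hobj : forall x z, obj_u Q c lam u x z =
   FU R m Q c U x + \sum_(i in U) lam i * (z i)%:R by [].
rewrite /f_u.
set S := (X in inf X).
have key : forall t, S t -> p s0 + lam u * indic al <= t.
  move=> t [x [z [[hfeas hxu] ->]]].
  pose sz := [ffun i => z (@enum_val _ (mem A) (cast_ord E i))].
  have Tsz : Ts sz = [set i in A | z i].
    apply/setP => v; rewrite inE; apply/imsetP/andP => [[i]|[vA zv]].
      rewrite inE /= ffunE => zi ->; split; [exact: enum_valP | done].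
    exists (cast_ord (esym E) (enum_rank_in vA v)).
      by rewrite inE /= ffunE cast_ordKV enum_rankK_in.
    by rewrite cast_ordKV enum_rankK_in.
  have xzero : forall i, i \in U -> ~~ z i -> x i = 0.
    by move=> i iU zi; have := hfeas i iU; rewrite (negbTE zi) subr0 mulr1.
  have hF := @FU_min R m Q c hQs hpd U u huU (Ts sz) (TsU sz) (uTs sz) al x hxu.
  have hF' : FU R m Q c U (xs R m Q c u (Ts sz) al) <= FU R m Q c U x.
    apply: hF => i iU; rewrite Tsz !inE => /nandP [h|h] iu; apply: xzero => //.
    by move: h; rewrite iu; move: iU; rewrite inE => ->.
  rewrite FU_xs // in hF'.
  rewrite hobj (@sum_lam_split R m lam U (Ts sz) u z huU (TsA sz)); last first.
    by move=> i iA; rewrite Tsz inE iA.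
  have hind : lam u * indic al <= lam u * (z u)%:R.
    rewrite /indic; case: (eqVneq al 0) => [_|aln0].
      by rewrite mulr0 mulr_ge0 ?ler0n // ltW.
    case: (boolP (z u)) => zu; first by [].
    by move: aln0; rewrite -hxu xzero // eqxx.
  have := hs0 sz isT; rewrite /p => hmin.
  lra.
have mem : S (p s0 + lam u * indic al).
  exists (xs R m Q c u (Ts s0) al), (fun i => (i \in Ts s0) || ((i == u) && (al != 0))).
  split; first split.
  - move=> i iU; case: (boolP (i \in Ts s0)) => iT /=; first by rewrite subrr mulr0.
    case: (eqVneq i u) => [->|iu] /=.
      rewrite xsu //; case: (eqVneq al 0) => [->|] /=; first by rewrite mul0r.
      by rewrite subrr mulr0.
    by rewrite xso // mul0r.
  - exact: xsu.
  rewrite hobj FU_xs // (@sum_lam_split R m lam U (Ts s0) u (fun i => (i \in Ts s0) || ((i == u) && (al != 0))) huU (TsA s0)); last first.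
    by move=> i; rewrite !inE => /andP [/negbTE -> _]; rewrite andFb orbF.
  rewrite (negbTE (uTs s0)) eqxx /= /p /indic; ring.
apply/le_anti/andP; split.
  by apply: (ge_inf _ mem); exists (p s0 + lam u * indic al).
by apply: lb_le_inf; [exists (p s0 + lam u * indic al) | exact: key].
Qed.
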